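(* Let $A$ be a finitely generated free abelian group and $d\ge 4$. Let $\mathcal{J}(A)=\bigoplus_{k>0}\Gamma^k(A)$ be the augmentation ideal of the divided power algebra $\Gamma(A)=\Gamma_{\mathbb{Z}}(A)$, and filter $\Gamma^d(A)$ by $F_{-i}\Gamma^d(A)=\mathcal{J}(A)^i\cap\Gamma^d(A)$, with $\mathrm{gr}_{-i}\Gamma^d(A)=F_{-i}\Gamma^d(A)/F_{-i-1}\Gamma^d(A)$. Then $\mathrm{gr}_{-d+1}\Gamma^d(A)\simeq\sigma_{(1,d-2)}(A/2)$.
   Context: $A/2=A\otimes\mathbb{Z}/2$. For an $\mathbb{F}_2$-vector space $V$, $V^{(1)}$ is the Frobenius twist (the subfunctor of $S^2_{\mathbb{F}_2}(V)$ spanned by squares), and for $n\ge2$, $\sigma_{(1,n)}(V)$ is the cokernel of $u:\Lambda^2_{\mathbb{F}_2}(V^{(1)})\otimes S^{n-2}_{\mathbb{F}_2}(V)\to V^{(1)}\otimes S^n_{\mathbb{F}_2}(V)$, $u((x\wedge y)\otimes z)=x\otimes(y^2z)-y\otimes(x^2z)$ (here $x,y$ are viewed both as elements of $V^{(1)}$ and, via their squares $x^2,y^2$, in $S^2(V)$). *)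

(* Defs.v *)
From HB Require Import structures.
From mathcomp Require Import all_boot all_algebra.
From mathcomp Require Import mpoly.
Unset Printing Implicit Defensive.
Import GRing.Theory.
Local Open Scope ring_scope.

Inductive zspan {V : zmodType} (P : V -> Prop) : V -> Prop :=
| zspan0 : zspan P 0
| zspan_gen x : P x -> zspan P x
| zspan_sub x y : zspan P x -> zspan P y -> zspan P (x - y).

(* H1/K1 ~= H2/K2 as abelian groups (K_i subgroups of H_i): there is a map
   phi : H1 -> H2 inducing a group isomorphism of the quotients. *)
Definition quot_iso {V W : zmodType} (H1 K1 : V -> Prop) (H2 K2 : W -> Prop) : Prop :=
  exists phi : V -> W,
    [/\ (forall x, H1 x -> H2 (phi x)),
        (forall x y, H1 x -> H1 y -> K2 (phi (x + y) - phi x - phi y)),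
        (forall x, H1 x -> (K2 (phi x) <-> K1 x)) &
        (forall y, H2 y -> exists2 x, H1 x & K2 (phi x - y))].

(* ---------- Divided power algebra Gamma_Z(Z^n), modelled inside Q[x_1..x_n]
   as the subring with Z-basis the divided monomials x^[a] = x^a / a!. ---- *)
Definition dpmon (n : nat) (a : 'X_{1..n}) : {mpoly rat[n]} :=
  ((\prod_(i < n) (a i)`!)%:R)^-1 *: 'X_[a].

Definition Gamma (n : nat) : {mpoly rat[n]} -> Prop :=
  zspan (fun p => exists a, p = dpmon n a).

Definition GammaD (n d : nat) : {mpoly rat[n]} -> Prop :=
  zspan (fun p => exists2 a, mdeg a = d & p = dpmon n a).

Definition Jaug (n : nat) : {mpoly rat[n]} -> Prop :=
  zspan (fun p => exists2 a, (0 < mdeg a)%N & p = dpmon n a).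

Definition Jpow (n i : nat) : {mpoly rat[n]} -> Prop :=
  if i is 0 then Gamma n
  else zspan (fun p => exists2 f : 'I_i -> {mpoly rat[n]},
                 (forall j, Jaug n (f j)) & p = \prod_(j < i) f j).

Definition FilGamma (n i d : nat) (p : {mpoly rat[n]}) : Prop :=
  Jpow n i p /\ GammaD n d p.

(* S(V) = F_2[x_1..x_n]; S(V) (x) S(V) = {mpoly S(V)[n]} (outer variables
   = first tensor factor, coefficients = second tensor factor).
   V^{(1)} (x) S^m(V) sits inside S^2(V) (x) S^m(V). ------------------------ *)
Definition SV (n : nat) := {mpoly 'F_2[n]}.
Definition SV2 (n : nat) := {mpoly (SV n)[n]}.

Definition Sym (n k : nat) : SV n -> Prop :=
  zspan (fun p => exists2 m : 'X_{1..n}, mdeg m = k & p = 'X_[m]).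

(* a vector of V = F_2^n, given by its support S, as an element of S^1(V) *)
Definition linV (n : nat) (S : {set 'I_n}) : SV n := \sum_(i in S) 'X_i.
(* the same vector x seen in V^{(1)} \subset S^2(V), first tensor factor:
   x^{(1)} = x^2 = sum_{i in S} x_i^2 (characteristic 2) *)
Definition frobV (n : nat) (S : {set 'I_n}) : SV2 n := \sum_(i in S) ('X_i) ^+ 2.

Definition sigmaTarget (n m : nat) : SV2 n -> Prop :=
  zspan (fun p => exists S, exists2 w, Sym n m w & p = frobV n S * w%:MP).

(* image of u : Lambda^2(V^{(1)}) (x) S^{m-2}(V) -> V^{(1)} (x) S^m(V),
   u((x ^ y) (x) z) = x (x) (y^2 z) - y (x) (x^2 z) *)
Definition sigmaImage (n m : nat) : SV2 n -> Prop :=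
  zspan (fun p => exists X Y, exists2 z, Sym n (m - 2) z &
           p = frobV n X * ((linV n Y) ^+ 2 * z)%:MP - frobV n Y * ((linV n X) ^+ 2 * z)%:MP).

(* Main.v *)
Require Import Defs.
From HB Require Import structures.
From mathcomp Require Import all_boot all_algebra.
From mathcomp Require Import mpoly.
From mathcomp Require Import zify.
Import GRing.Theory Num.Theory.
Local Open Scope ring_scope.


Section ZS.
Context {V : zmodType} (P : V -> Prop).
Lemma zspanN x : zspan P x -> zspan P (- x).
Proof. by move=> h; rewrite -sub0r; apply: zspan_sub => //; apply: zspan0. Qed.
Lemma zspanD x y : zspan P x -> zspan P y -> zspan P (x + y).
Proof. by move=> hx hy; rewrite -[y]opprK; apply: zspan_sub => //; apply: zspanN. Qed.
Lemma zspanMn x k : zspan P x -> zspan P (x *+ k).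
Proof. move=> h; elim: k => [|k IH]; first by rewrite mulr0n; apply: zspan0.
by rewrite mulrS; apply: zspanD. Qed.
Lemma zspanMz x (z : int) : zspan P x -> zspan P (x *~ z).
Proof. move=> h; case: z => k; first by apply: zspanMn.
by rewrite NegzE mulrNz; apply/zspanN/zspanMn. Qed.
Lemma zspan_sum (I : Type) (r : seq I) (F : I -> V) :
  (forall i, zspan P (F i)) -> zspan P (\sum_(i <- r) F i).
Proof. move=> h; elim: r => [|i r IH]; first by rewrite big_nil; apply: zspan0.
by rewrite big_cons; apply: zspanD. Qed.
End ZS.

Lemma zspan_mono {V : zmodType} (P Q : V -> Prop) x :
  (forall y, P y -> zspan Q y) -> zspan P x -> zspan Q x.
Proof. move=> h; elim=> [|y /h //|y z _ hy _ hz]; first exact: zspan0.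
exact: zspan_sub. Qed.

Lemma zspan_map {V W : zmodType} (P : V -> Prop) (Q : W -> Prop) (f : V -> W) x :
  (forall a b, f (a - b) = f a - f b) ->
  (forall y, P y -> zspan Q (f y)) -> zspan P x -> zspan Q (f x).
Proof. move=> fB h; elim=> [|y /h //|y z _ hy _ hz].
- by have := fB 0 0; rewrite !subrr => ->; apply: zspan0.
- by rewrite fB; apply: zspan_sub. Qed.

Lemma F2_2 : (2%:R : 'F_2) = 0. Proof. by apply/eqP. Qed.
Lemma F2_1 : (1 : 'F_2) != 0. Proof. by []. Qed.


Section Coef.
Variable n : nat.
Implicit Types (m : 'X_{1..n}).

Definition mfact (a : 'X_{1..n}) : nat := (\prod_(i < n) (a i)`!)%N.
Definition sqf m : bool := [forall i, m i <= 1]%N.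

Definition good (i : nat) m (c : rat) : Prop :=
 [/\ (mdeg m < i)%N -> c = 0, mdeg m = i -> c \is a Num.int,
     mdeg m = i.+1 -> (2*c) \is a Num.int &
     mdeg m = i.+1 -> sqf m -> c \is a Num.int].

Lemma good0 i m : good i m 0.
Proof. by split=> // *; rewrite ?mulr0 rpred0. Qed.

Lemma goodB i m a b : good i m a -> good i m b -> good i m (a - b).
Proof.
case=> h1 h2 h3 h4 [g1 g2 g3 g4]; split=> *.
- by rewrite h1 // g1 // subrr.
- by rewrite rpredB ?h2 ?g2.
- by rewrite mulrBr rpredB ?h3 ?g3.
- by rewrite rpredB ?h4 ?g4.
Qed.

Lemma goodD i m a b : good i m a -> good i m b -> good i m (a + b).
Proof.
move=> ha hb; rewrite -[b]opprK; apply: goodB => //.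
by rewrite -sub0r; apply: goodB => //; apply: good0.
Qed.

Lemma sqfDl (k1 k2 : 'X_{1..n}) : sqf (k1 + k2) -> sqf k1.
Proof.
move=> /forallP h; apply/forallP => i; have := h i; rewrite mnmDE.
by apply: leq_trans; apply: leq_addr.
Qed.

Lemma sqfDr (k1 k2 : 'X_{1..n}) : sqf (k1 + k2) -> sqf k2.
Proof. by rewrite addmC; apply: sqfDl. Qed.

Lemma good_term i (k1 k2 : 'X_{1..n}) a b : good i k1 a -> good 1 k2 b ->
  good i.+1 (k1 + k2)%MM (a * b).
Proof.
case=> h1 h2 h3 h4 [g1 g2 g3 g4].
have [lt1|ge1] := ltnP (mdeg k1) i; first by rewrite h1 // mul0r; apply: good0.
have [lt2|ge2] := ltnP (mdeg k2) 1; first by rewrite g1 // mulr0; apply: good0.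
rewrite /good mdegD.
set D1 := mdeg k1 in h1 h2 h3 h4 ge1 *; set D2 := mdeg k2 in g1 g2 g3 g4 ge2 *.
split=> h.
- exfalso; rewrite -/D1 -/D2 in h; lia.
- have e1 : D1 = i by lia. have e2 : D2 = 1%N by lia.
  by rewrite rpredM ?h2 ?g2.
- have [e1|e1] : D1 = i \/ D1 = i.+1 by lia.
  + have e2 : D2 = 2%N by lia.
    by rewrite mulrCA rpredM ?h2 ?g3.
  + have e2 : D2 = 1%N by lia.
    by rewrite mulrA rpredM ?h3 ?g2.
- move=> sq; have [e1|e1] : D1 = i \/ D1 = i.+1 by lia.
  + have e2 : D2 = 2%N by lia.
    by rewrite rpredM ?h2 ?g4 //; apply: sqfDr sq.
  + have e2 : D2 = 1%N by lia.
    by rewrite rpredM ?h4 ?g2 //; apply: sqfDl sq.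
Qed.

Definition Tinv i (p : {mpoly rat[n]}) := forall m, good i m p@_m.

Lemma Tinv_mul i p q : Tinv i p -> Tinv 1 q -> Tinv i.+1 (p * q).
Proof.
move=> hp hq m; rewrite mcoeffM.
apply: (big_ind (good i.+1 m)); [exact: good0| exact: goodD|].
move=> k /eqP e; have := @good_term i k.1 k.2 _ _ (hp k.1) (hq k.2); by rewrite -e.
Qed.

Lemma Tinv_zspan i P p : (forall q, P q -> Tinv i q) -> zspan P p -> Tinv i p.
Proof.
move=> h; elim=> [|y /h //|y z _ hy _ hz] m.
- by rewrite mcoeff0; apply: good0.
- by rewrite mcoeffB; apply: goodB.
Qed.

Lemma fact_dvd (I : Type) (r : seq I) (F : I -> nat) :
  (\prod_(i <- r) (F i)`! %| (\sum_(i <- r) F i)`!)%N.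
Proof.
elim: r => [|x r IH]; first by rewrite !big_nil.
rewrite !big_cons; apply: dvdn_trans (dvdn_mul (dvdnn _) IH) _.
rewrite -(bin_fact (leq_addr (\sum_(i <- r) F i) (F x))) addKn.
exact: dvdn_mull.
Qed.

Lemma mfact_dvd (a : 'X_{1..n}) : (mfact a %| (mdeg a)`!)%N.
Proof. by rewrite /mfact mdegE; apply: fact_dvd. Qed.

Lemma mfact_gt0 (a : 'X_{1..n}) : (0 < mfact a)%N.
Proof. by rewrite /mfact; apply: prodn_gt0 => i; apply: fact_gt0. Qed.

Lemma mfact_sqf (a : 'X_{1..n}) : sqf a -> mfact a = 1%N.
Proof.
move=> /forallP h; rewrite /mfact big1 // => i _.
by have := h i; case: (a i) => [|[|]].
Qed.

Lemma Tinv_dpmon (a : 'X_{1..n}) : (0 < mdeg a)%N -> Tinv 1 (dpmon n a).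
Proof.
move=> ha m; rewrite /dpmon mcoeffZ mcoeffX.
have [<-|ne] := eqVneq a m; last by rewrite mulr0; apply: good0.
rewrite mulr1 -/(mfact a); split=> h.
- by exfalso; lia.
- have := mfact_dvd a; rewrite h => /(dvdn_leq (isT : (0 < 1`!)%N)) le1.
  have {}le1 : (mfact a <= 1)%N := le1.
  have -> : mfact a = 1%N by have := mfact_gt0 a; lia.
  by rewrite invr1 rpred1.
- have := mfact_dvd a; rewrite h => /(dvdn_leq (isT : (0 < 2`!)%N)) le1.
  have {}le1 : (mfact a <= 2)%N := le1.
  have [->|->] : mfact a = 1%N \/ mfact a = 2%N by have := mfact_gt0 a; lia.
    by rewrite invr1 mulr1 rpred_nat.
  by rewrite mulfV // rpred1.
- by move=> sq; rewrite mfact_sqf // invr1 rpred1.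
Qed.

Lemma Tinv1 : Tinv 0 1.
Proof.
move=> m; rewrite mcoeff1; split=> h.
- by [].
- exact: natr_int.
- have /negbTE -> : m != 0%MM by rewrite -mdeg_eq0 h.
  by rewrite mulr0 rpred0.
- have /negbTE -> : m != 0%MM by rewrite -mdeg_eq0 h.
  by rewrite rpred0.
Qed.

Lemma Tinv_Jaug p : Jaug n p -> Tinv 1 p.
Proof. by apply: Tinv_zspan => q [a ha ->]; apply: Tinv_dpmon. Qed.

Lemma Tinv_prod i (f : 'I_i -> {mpoly rat[n]}) :
  (forall j, Jaug n (f j)) -> Tinv i (\prod_(j < i) f j).
Proof.
elim: i f => [|i IH] f hf; first by rewrite big_ord0; apply: Tinv1.
rewrite big_ord_recr /=; apply: Tinv_mul; first by apply: IH.
exact: Tinv_Jaug.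
Qed.

Lemma Tinv_Jpow i p : Jpow n i.+1 p -> Tinv i.+1 p.
Proof. by apply: Tinv_zspan => q [f hf ->]; apply: Tinv_prod. Qed.

Lemma GammaD_supp d p : GammaD n d p -> forall m, mdeg m != d -> p@_m = 0.
Proof.
move=> h m hm; elim: h => [|y [a ha ->]|y z _ hy _ hz].
- by rewrite mcoeff0.
- by rewrite /dpmon mcoeffZ mcoeffX; case: eqP => [e|]; [rewrite -e ha eqxx in hm|rewrite mulr0].
- by rewrite mcoeffB hy hz subrr.
Qed.

End Coef.


Section Build.
Variable n : nat.

Lemma Jpow_mulJ i p q : Jpow n i.+1 p -> Jaug n q -> Jpow n i.+2 (p * q).
Proof.
move=> hp hq; rewrite /Jpow.
apply: (@zspan_map _ _ _ _ (fun x => x * q) _ _ _ hp) => [a b|y [g hg ->]]; first by rewrite mulrBl.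
pose h (j : 'I_i.+2) : {mpoly rat[n]} :=
  if insub (val j) is Some j' then g j' else q.
apply: zspan_gen; exists h.
  by move=> j; rewrite /h; case: insubP.
symmetry; rewrite big_ord_recr /=; congr (_ * _).
  apply: eq_bigr => j _; rewrite /h; case: insubP => [j' _ e|]; last by rewrite /= ltn_ord.
  by congr g; apply: val_inj; rewrite e.
by rewrite /h; case: insubP => // j'; rewrite /= ltnn.
Qed.

Lemma Jpow1 q : Jaug n q -> Jpow n 1 q.
Proof.
move=> hq; apply: zspan_gen; exists (fun _ => q) => //.
by rewrite big_ord1.
Qed.

Lemma Jaug_dpmon a : (0 < mdeg a)%N -> Jaug n (dpmon n a).
Proof. by move=> h; apply: zspan_gen; exists a. Qed.

Lemma mnm_le_mdeg (m : 'X_{1..n}) i : (m i <= mdeg m)%N.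
Proof. by rewrite mdegE (bigD1 i) //= leq_addr. Qed.

Lemma dpmon_deg1 a : mdeg a = 1%N -> dpmon n a = 'X_[a].
Proof.
move=> h; rewrite /dpmon -/(mfact n a) mfact_sqf ?invr1 ?scale1r //.
by apply/forallP => i; rewrite -h mnm_le_mdeg.
Qed.

Lemma JpowX k (m : 'X_{1..n}) : mdeg m = k.+1 -> Jpow n k.+1 'X_[m].
Proof.
elim: k m => [|k IH] m hm.
  by rewrite -dpmon_deg1 //; apply/Jpow1/Jaug_dpmon; rewrite hm.
case: (pickP (fun j => 0 < m j)%N) => [j hj|h0]; last first.
  have : m = 0%MM by apply/mnmP => j; rewrite mnm0E; have := h0 j; case: (m j).
  by move=> e; rewrite e mdeg0 in hm.
have le : (U_(j) <= m)%MM by apply/mnm_lepP => i; rewrite mnm1E; case: eqP => // <-.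
rewrite -(submK le) mpolyXD; apply: Jpow_mulJ.
  apply: IH; have := mdegD (m - U_(j)) U_(j); rewrite submK // mdeg1; lia.
by rewrite -dpmon_deg1 ?mdeg1 //; apply/Jaug_dpmon; rewrite mdeg1.
Qed.

Lemma mfact2 k : mfact n (U_(k) + U_(k))%MM = 2%N.
Proof.
rewrite /mfact (bigD1 k) //= big1 ?muln1; first by rewrite mnmDE mnm1E eqxx.
by move=> i /negbTE hi; rewrite mnmDE mnm1E eq_sym hi.
Qed.

Lemma Jpow_half d (a : 'X_{1..n}) k : (4 <= d)%N -> mdeg a = d -> (2 <= a k)%N ->
  Jpow n d.-1 (2^-1 *: 'X_[a]).
Proof.
move=> hd ha hk.
have le : (U_(k) + U_(k) <= a)%MM.
  by apply/mnm_lepP => i; rewrite mnmDE mnm1E; case: eqP => // <-.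
have hc : mdeg (a - (U_(k) + U_(k))) = (d - 3).+1.
  have := mdegD (a - (U_(k) + U_(k))) (U_(k) + U_(k)); rewrite submK // mdegD mdeg1; lia.
have -> : d.-1 = (d - 3).+2 by lia.
rewrite -(submK le) mpolyXD.
have -> : 2^-1 *: ('X_[a - (U_(k) + U_(k))] * 'X_[U_(k) + U_(k)]) =
   'X_[a - (U_(k) + U_(k))] * dpmon n (U_(k) + U_(k)) :> {mpoly rat[n]}.
  by rewrite /dpmon -/(mfact n _) mfact2 scalerAr.
apply: Jpow_mulJ; first exact: JpowX.
by apply: Jaug_dpmon; rewrite mdegD mdeg1.
Qed.

Lemma zspan_coef (P : {mpoly rat[n]} -> Prop) (p : {mpoly rat[n]}) (g : 'X_{1..n} -> rat) :
  (forall m, p@_m != 0 -> (p@_m * g m) \is a Num.int /\ g m != 0 /\ zspan P ((g m)^-1 *: 'X_[m])) ->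
  zspan P p.
Proof.
move=> h; rewrite [p]mpolyE; apply: zspan_sum => m.
have [->|nz] := eqVneq p@_m 0; first by rewrite scale0r; apply: zspan0.
have [/intrP [z hz] [gnz hP]] := h m nz.
have -> : p@_m *: 'X_[m] = ((g m)^-1 *: 'X_[m]) *~ z.
  rewrite -scaler_int scalerA -hz. by rewrite mulfK.
exact: zspanMz.
Qed.

Lemma GammaD_build d p :
  (forall m, p@_m != 0 -> mdeg m = d /\ (p@_m * (mfact n m)%:R) \is a Num.int) ->
  GammaD n d p.
Proof.
move=> h; rewrite /GammaD; refine (@zspan_coef _ p (fun m => ((mfact n m)%:R : rat)) _) => m nz.
have [hd hi] := h m nz; split=> //; split; first by rewrite pnatr_eq0 -lt0n mfact_gt0.
by apply: zspan_gen; exists m.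
Qed.

Lemma Jpow_build k p :
  (forall m, p@_m != 0 -> mdeg m = k.+1 /\ p@_m \is a Num.int) -> Jpow n k.+1 p.
Proof.
move=> h; rewrite /Jpow; apply: (@zspan_coef _ _ (fun _ => (1 : rat))) => m nz.
have [hd hi] := h m nz; rewrite mulr1; split=> //; split; first exact: oner_neq0.
by rewrite invr1 scale1r; apply: JpowX.
Qed.

End Build.


Lemma sqr_sum_char2 (R : comPzRingType) (I : Type) (r : seq I) (P : pred I) (F : I -> R) :
  (2%:R : R) = 0 -> (\sum_(i <- r | P i) F i) ^+ 2 = \sum_(i <- r | P i) F i ^+ 2.
Proof.
move=> h2; apply: (big_rec2 (fun x y => x ^+ 2 = y)); first by rewrite expr0n.
by move=> i x y _ <-; rewrite sqrrD -mulr_natr h2 mulr0 addr0.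
Qed.

Section Sig.
Variable n : nat.

Lemma SV_2 : (2%:R : SV n) = 0.
Proof. by rewrite -(rmorph_nat (@mpolyC n 'F_2)) F2_2 ?mpolyC0. Qed.

Lemma SV2_2 : (2%:R : SV2 n) = 0.
Proof. by rewrite -(rmorph_nat (@mpolyC n (SV n))) SV_2 ?mpolyC0. Qed.

Definition mu (p : SV2 n) : SV n := p.@[fun i => 'X_i].

Lemma mu_frobV S : mu (frobV n S) = linV n S ^+ 2.
Proof.
rewrite /mu /frobV /linV sqr_sum_char2 ?SV_2 // raddf_sum /=.
by apply: eq_bigr => i _; rewrite rmorphXn /= mevalXU.
Qed.

Lemma mu_sigmaImage m p : sigmaImage n m p -> mu p = 0.
Proof.
elim=> [|y [X [Y [z _ ->]]]|y z _ hy _ hz].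
- by rewrite /mu meval0.
- rewrite /mu rmorphB !rmorphM /= !mevalC -!/(mu _) !mu_frobV.
  by rewrite mulrCA subrr.
- by rewrite /mu mevalB -!/(mu _) hy hz subrr.
Qed.

Definition G (m : 'X_{1..n}) : SV2 n :=
  if [pick k | (1 < m k)%N] is Some k then 'X_k ^+ 2 * ('X_[m - (U_(k) + U_(k))])%:MP else 0.

Lemma XX (R : nzRingType) (k : 'I_n) : ('X_k ^+ 2 : {mpoly R[n]}) = 'X_[U_(k) + U_(k)].
Proof. by rewrite mpolyXD expr2. Qed.

Lemma mu_G m : mu (G m) = (~~ sqf n m)%:R *: 'X_[m].
Proof.
rewrite /G; case: pickP => [k hk|h0].
- have -> : ~~ sqf n m by apply/forallPn; exists k; rewrite -ltnNge.
  rewrite /mu rmorphM /= mevalC rmorphXn /= mevalXU scale1r XX -mpolyXD.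
  congr 'X_[_]; rewrite addmC submK //.
  by apply/mnm_lepP => i; rewrite mnmDE mnm1E; case: eqP => // <-.
- have -> : sqf n m by apply/forallP => i; have := h0 i; rewrite /= ltnNge => /negbFE.
  by rewrite scale0r /mu meval0.
Qed.

End Sig.


Lemma numqB (a b : rat) : a \is a Num.int -> b \is a Num.int -> numq (a - b) = numq a - numq b.
Proof. by move=> /intrP [za ->] /intrP [zb ->]; rewrite -rmorphB /= !numq_int. Qed.
Lemma numqD (a b : rat) : a \is a Num.int -> b \is a Num.int -> numq (a + b) = numq a + numq b.
Proof. by move=> /intrP [za ->] /intrP [zb ->]; rewrite -rmorphD /= !numq_int. Qed.

Lemma F2_even (z : int) : (z%:~R : 'F_2) = 0 -> exists q : int, z = q * 2.
Proof.
move=> h; have e := divz_eq z 2.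
have h0 := @modz_ge0 z 2 isT; have h1 := @ltz_mod z 2 isT.
have [r0|r1] : (z %% 2)%Z = 0 \/ (z %% 2)%Z = 1 by move: h0 h1; rewrite /=; lia.
  by exists (z %/ 2)%Z; rewrite {1}e r0 addr0.
move: h; rewrite e r1 intrD intrM /=. have t2 : ((2:int)%:~R : 'F_2) = 0 by apply/eqP.
have t1 : ((1:int)%:~R : 'F_2) = 1 by [].
by rewrite t2 t1 mulr0 add0r => /eqP; rewrite oner_eq0.
Qed.

Section Main.
Variables n d : nat.

Definition phi (x : {mpoly rat[n]}) : SV2 n :=
  \sum_(m : 'X_{1..n < d.+1}) G n m *~ numq (2 * x@_m).

Definition HI (x : {mpoly rat[n]}) := forall m, (2 * x@_m) \is a Num.int.

Lemma phiB x y : HI x -> HI y -> phi (x - y) = phi x - phi y.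
Proof.
move=> hx hy; rewrite /phi -sumrB; apply: eq_bigr => m _.
by rewrite mcoeffB mulrBr numqB ?mulrzBr ?hx ?hy.
Qed.

Lemma phiD x y : HI x -> HI y -> phi (x + y) = phi x + phi y.
Proof.
move=> hx hy; rewrite /phi -big_split; apply: eq_bigr => m _ /=.
by rewrite mcoeffD mulrDr numqD ?mulrzDr ?hx ?hy.
Qed.

Lemma phi0 : phi 0 = 0.
Proof.
rewrite /phi big1 // => m _; rewrite mcoeff0 mulr0.
by rewrite (numq_int 0) mulr0z.
Qed.

Lemma mu_phi x : mu n (phi x) =
  \sum_(m : 'X_{1..n < d.+1}) (((numq (2*x@_m))%:~R : 'F_2) * (~~ sqf n m)%:R) *: 'X_[m].
Proof.
rewrite /mu /phi raddf_sum; apply: eq_bigr => m _ /=.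
by rewrite raddfMz /= -/(mu _ _) mu_G -scaler_int scalerA.
Qed.

Lemma coef_mu_phi x (m0 : 'X_{1..n}) : (mdeg m0 < d.+1)%N ->
  (mu n (phi x))@_m0 = ((numq (2*x@_m0))%:~R : 'F_2) * (~~ sqf n m0)%:R.
Proof. by move=> h; rewrite mu_phi (@mcoeff_mpoly _ _ (fun m => ((numq (2*x@_m))%:~R : 'F_2) * (~~ sqf n m)%:R)). Qed.

End Main.


Lemma sub4 (V : zmodType) (a b c e : V) : a - b - (c - e) = a - c - (b - e).
Proof. by rewrite !opprB addrACA [RHS]addrACA [- c + _]addrC. Qed.

Section Final.
Variables n d : nat.
Hypothesis hd : (4 <= d)%N.

Lemma le2U (m : 'X_{1..n}) k : (1 < m k)%N -> (U_(k) + U_(k) <= m)%MM.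
Proof. by move=> h; apply/mnm_lepP => i; rewrite mnmDE mnm1E; case: eqP => // <-. Qed.

Lemma mdeg_sub2 (m : 'X_{1..n}) k : (1 < m k)%N -> mdeg (m - (U_(k) + U_(k))) = (mdeg m - 2)%N.
Proof.
move=> h; have := mdegD (m - (U_(k) + U_(k))) (U_(k) + U_(k)).
rewrite submK ?le2U // mdegD mdeg1; lia.
Qed.

Lemma H1_facts x : FilGamma n d.-1 d x -> forall m,
  [/\ x@_m != 0 -> mdeg m = d, (2 * x@_m) \is a Num.int & (sqf n m -> x@_m \is a Num.int)].
Proof.
case=> hJ hG m; have sup := @GammaD_supp n d x hG.
have e : d.-1 = (d-2).+1 by lia.
rewrite e in hJ; have T := @Tinv_Jpow n _ x hJ.
have [z0|nz] := eqVneq x@_m 0; first by rewrite z0 mulr0 !rpred0.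
have hm : mdeg m = d by apply/eqP; apply: contraNT nz => /sup ->.
have [_ _ g3 g4] := T m; split => //.
  by apply: g3; lia.
by apply: g4; lia.
Qed.

Lemma H1_HI x : FilGamma n d.-1 d x -> HI n x.
Proof. by move=> h m; have [] := @H1_facts _ h m. Qed.

Lemma K1_int x : FilGamma n d d x -> forall m, x@_m \is a Num.int.
Proof.
case=> hJ hG m; have sup := @GammaD_supp n d x hG.
have e : d = (d-1).+1 by lia.
rewrite e in hJ; have T := @Tinv_Jpow n _ x hJ.
have [z0|nz] := eqVneq x@_m 0; first by rewrite z0 rpred0.
have hm : mdeg m = d by apply/eqP; apply: contraNT nz => /sup ->.
have [_ g2 _ _] := T m; apply: g2; lia.
Qed.

Lemma tgtG m : mdeg m = d -> sigmaTarget n (d - 2) (G n m).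
Proof.
move=> hm; rewrite /G; case: pickP => [k hk|_]; last exact: zspan0.
apply: zspan_gen; exists [set k]; exists 'X_[m - (U_(k) + U_(k))].
  by apply: zspan_gen; exists (m - (U_(k) + U_(k)))%MM => //; rewrite mdeg_sub2 // hm.
by rewrite /frobV big_set1.
Qed.

Lemma cond1 x : FilGamma n d.-1 d x -> sigmaTarget n (d - 2) (phi n d x).
Proof.
move=> h; apply: zspan_sum => m; have [h1 _ _] := @H1_facts _ h m.
have [z0|nz] := eqVneq x@_m 0.
  by rewrite z0 mulr0 (numq_int 0) mulr0z; apply: zspan0.
by apply: zspanMz; apply: tgtG; apply: h1.
Qed.


Lemma cond3a x : FilGamma n d.-1 d x -> sigmaImage n (d - 2) (phi n d x) -> FilGamma n d d x.
Proof.
move=> hx /mu_sigmaImage h0; split; last exact: hx.2.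
have e : d = (d-1).+1 by lia.
have JB := @Jpow_build n (d-1) x; rewrite -e in JB; apply: JB => m nz.
have [h1 h2 hs] := @H1_facts _ hx m; split; first exact: h1.
case: (boolP (sqf n m)) => sq; first exact: hs.
have hlt : (mdeg m < d.+1)%N by rewrite h1.
have := @coef_mu_phi n d x m hlt; rewrite h0 mcoeff0 sq mulr1 => /esym/F2_even [q hq].
have : 2 * x@_m = 2 * q%:~R by rewrite -(numqK h2) hq intrM mulrC.
have n2 : (2 : rat) != 0 by [].
by move/(mulfI n2) => ->; apply: intr_int.
Qed.

Lemma cond3b x : FilGamma n d d x -> phi n d x = 0.
Proof.
move=> hx; rewrite /phi big1 // => m _.
have /intrP [z ->] := @K1_int _ hx m.
have -> : 2 * z%:~R = (z * 2)%:~R :> rat by rewrite intrM mulrC.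
rewrite numq_int mulrzA -mulrzr.
have -> : ((2:int)%:~R : SV2 n) = 2%:R by [].
by rewrite SV2_2 mulr0.
Qed.

Lemma FilB i x y : FilGamma n i d x -> FilGamma n i d y -> FilGamma n i d (x - y).
Proof.
case=> hx1 hx2 [hy1 hy2]; split; last exact: zspan_sub.
by move: hx1 hy1; rewrite /Jpow; case: i => [|i]; apply: zspan_sub.
Qed.

Lemma Fil0 i : FilGamma n i d 0.
Proof. by split; [rewrite /Jpow; case: i => [|i]|]; apply: zspan0. Qed.

Definition Reach (y : SV2 n) :=
  exists2 x, FilGamma n d.-1 d x & sigmaImage n (d - 2) (phi n d x - y).

Lemma Reach0 : Reach 0.
Proof. by exists 0; [apply: Fil0|rewrite phi0 subrr; apply: zspan0]. Qed.

Lemma ReachB y1 y2 : Reach y1 -> Reach y2 -> Reach (y1 - y2).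
Proof.
move=> [x1 h1 k1] [x2 h2 k2]; exists (x1 - x2); first exact: FilB.
rewrite phiB; [|exact: (@H1_HI _ h1)|exact: (@H1_HI _ h2)].
have -> : phi n d x1 - phi n d x2 - (y1 - y2) = (phi n d x1 - y1) - (phi n d x2 - y2) by apply: sub4.
exact: zspan_sub.
Qed.

Lemma ReachD y1 y2 : Reach y1 -> Reach y2 -> Reach (y1 + y2).
Proof.
move=> h1 h2; rewrite -[y2]opprK; apply: ReachB => //.
by rewrite -sub0r; apply: ReachB => //; apply: Reach0.
Qed.

Lemma Reach_sum (I : Type) (r : seq I) (P : pred I) (F : I -> SV2 n) :
  (forall i, Reach (F i)) -> Reach (\sum_(i <- r | P i) F i).
Proof. by move=> h; apply: (big_ind Reach) => //; [apply: Reach0|apply: ReachD]. Qed.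

Lemma mfact_even (a : 'X_{1..n}) i : (1 < a i)%N -> (2 %| mfact n a)%N.
Proof.
move=> h; apply: (@dvdn_trans ((a i)`!)); first by apply: dvdn_fact; rewrite /=; lia.
by rewrite /mfact (bigD1 i) //= dvdn_mulr.
Qed.

Lemma ReachGen i (b : 'X_{1..n}) : mdeg b = (d - 2)%N ->
  Reach ('X_i ^+ 2 * ('X_[b])%:MP).
Proof.
move=> hb; set a := (b + (U_(i) + U_(i)))%MM.
have ha : mdeg a = d by rewrite /a !mdegD mdeg1; lia.
have hai : (1 < a i)%N by rewrite /a !mnmDE mnm1E eqxx; lia.
exists (2^-1 *: 'X_[a]).
  split; first by apply: (@Jpow_half n d a i) => //.
  apply: GammaD_build => m; rewrite mcoeffZ mcoeffX.
  have [<-|ne] := eqVneq a m; last by rewrite mulr0 eqxx.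
  move=> _.
  split=> //; rewrite mulr1 -(divnK (mfact_even a i hai)) natrM mulrC mulfK //.
have hlt : (mdeg a < d.+1)%N by rewrite ha.
have -> : phi n d (2^-1 *: 'X_[a]) = G n a.
  rewrite /phi (bigD1 (BMultinom hlt)) //= big1 ?addr0.
    by rewrite mcoeffZ mcoeffX eqxx mulr1 mulfV // (numq_int 1) mulr1z.
  move=> m hm; rewrite mcoeffZ mcoeffX.
  have -> : (a == m) = false.
    by apply/negbTE; apply: contra hm => /eqP e; apply/eqP/val_inj; rewrite /= e.
  by rewrite !mulr0 (numq_int 0) mulr0z.
rewrite /G; case: pickP => [k hk|h0]; last by have := h0 i; rewrite hai.
have [ek|ne] := eqVneq k i.
  by rewrite ek /a addmK subrr; apply: zspan0.
have hbk : (1 < b k)%N by move: hk; rewrite /a !mnmDE mnm1E eq_sym (negbTE ne); lia.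
apply: zspan_gen; exists [set k]; exists [set i]; exists ('X_[b - (U_(k) + U_(k))]).
  by apply: zspan_gen; exists (b - (U_(k) + U_(k)))%MM => //; rewrite mdeg_sub2 // hb.
rewrite /frobV /linV !big_set1 !XX -!mpolyXD.
have e1 : (U_(i) + U_(i) + (b - (U_(k) + U_(k))))%MM = (a - (U_(k) + U_(k)))%MM.
  apply/mnmP => j; rewrite /a !(mnmDE, mnmBE, mnm1E).
  move: hbk; case: (k =P j) => [ek|_]; case: (i =P j) => [ei|_]; rewrite ?ek /=; lia.
have e2 : (U_(k) + U_(k) + (b - (U_(k) + U_(k))))%MM = b.
  by rewrite addmC submK ?le2U.
by rewrite e1 e2.
Qed.

Lemma cond4 y : sigmaTarget n (d - 2) y -> Reach y.
Proof.
elim=> [|y' [S [w hw ->]]|y1 y2 _ h1 _ h2]; first exact: Reach0; last exact: ReachB.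
elim: hw => [|w' [b hb ->]|w1 w2 _ g1 _ g2].
- by rewrite mpolyC0 mulr0; apply: Reach0.
- rewrite /frobV mulr_suml; apply: Reach_sum => j; exact: (ReachGen j b hb).
- by rewrite mpolyCB mulrBr; exact: (ReachB _ _ g1 g2).
Qed.
End Final.

Local Close Scope ring_scope.

Theorem lemma8p4 (n d : nat) : 4 <= d ->
  quot_iso (FilGamma n d.-1 d) (FilGamma n d d)
           (sigmaTarget n (d - 2)) (sigmaImage n (d - 2)).
Proof.
move=> hd; exists (phi n d); split.
- by move=> x hx; apply: cond1.
- move=> x y hx hy.
  rewrite (@phiD n d x y (@H1_HI n d hd x hx) (@H1_HI n d hd y hy)).
  have -> : (phi n d x + phi n d y - phi n d x - phi n d y = 0)%R.
    by rewrite [(phi n d x + _)%R]addrC addrK subrr.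
  exact: zspan0.
- move=> x hx; split; first exact: cond3a.
  by move=> /(@cond3b n d hd x) ->; apply: zspan0.
- move=> y hy; have [x h1 h2] := @cond4 n d hd y hy; by exists x.
Qed.
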